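(* Let $M^Q(a|x)$ and $N^{Q'}(b|y)$ be PMDs. Then $M^Q(a|x)\succeq N^{Q'}(b|y)$ if and only if $M^Q(a|x)$ can be converted to $N^{Q'}(b|y)$ by a one-way LOCC from Alice to Bob, in the spatial model in which the PMD is regarded as a bipartite channel whose quantum input is held by Alice and whose program input and classical outcome are held by Bob.
   Context: All Hilbert spaces are finite-dimensional and all alphabets are finite. A PMD on $\mathcal{H}^Q$ with program set $\mathcal{X}$ and outcome set $\mathcal{A}$ is a family $\{M^Q(a|x)\}$ of operators on $\mathcal{H}^Q$ with $M^Q(a|x)\ge0$ and $\sum_a M^Q(a|x)=\mathbb{1}^Q$ for every $x$. In the spatial model, such a PMD is a bipartite channel: Alice inputs a quantum state on $\mathcal{H}^Q$, Bob inputs $x$ and receives $a$ with probability $\mathrm{Tr}[\rho M^Q(a|x)]$. A one-way LOCC conversion from Alice to Bob of $M^Q(a|x)$ into a device with Alice's quantum input $\mathcal{H}^{Q'}$, Bob's input $y$ and Bob's output $b$ consists of: a pre-processing by one-way LOCC (Alice to Bob) acting on Alice's input in $\mathcal{H}^{Q'}$ and Bob's input $y$, producing the input on $\mathcal{H}^Q$ for Alice's side of $M$ and the program $x$ on Bob's side; side memories that may be quantum on Alice's side and classical on Bob's side; and a post-processing by one-way LOCC (Alice to Bob) using the side memories and Bob's outcome $a$ to produce $b$; shared randomness is allowed. $M^Q(a|x)\succeq N^{Q'}(b|y)$ means that there exist a probability distribution $\mu(r)$, for each $r$ a quantum instrument $\{\mathcal{E}^{Q'\to Q}_{i|r}\}_i$,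 and conditional probability distributions $p(x|i,y,r)$, $q(b|a,x,i,y,r)$ such that for all $b,y$ \[N^{Q'}(b|y)=\sum_r\mu(r)\sum_{i,x,a}q(b|a,x,i,y,r)\,p(x|i,y,r)\,(\mathcal{E}^{Q'\to Q}_{i|r})^\dagger[M^Q(a|x)],\] with $\mathcal{E}^\dagger$ the adjoint (trace-dual) map. *)

(* Defs.v *)
(* Complex scalars: an arbitrary numClosedFieldType C
   (e.g. algC, or complex R for R : rcfType). *)
From HB Require Import structures.
From mathcomp Require Import all_boot all_order all_algebra.
From mathcomp Require Import mxtens.
Set Implicit Arguments.
Unset Strict Implicit.
Unset Printing Implicit Defensive.
Import Order.TTheory GRing.Theory Num.Theory.
Local Open Scope ring_scope.

Section Defs.
Variable C : numClosedFieldType.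

Definition adjmx m n (A : 'M[C]_(m, n)) : 'M[C]_(n, m) := (map_mx Num.conj A)^T.

Definition psd n (A : 'M[C]_n) : Prop :=
  adjmx A = A /\ forall v : 'cV[C]_n, 0 <= (adjmx v *m A *m v) 0 0.

(* probability distribution on a finite set (values real, nonnegative) *)
Definition prob_dist (T : finType) (p : T -> C) : Prop :=
  (forall t, 0 <= p t) /\ \sum_(t : T) p t = 1.

(* PMD on H^Q = C^d with program set X and outcome set A:  M x a = M^Q(a|x) *)
Definition PMD (d : nat) (X A : finType) (M : X -> A -> 'M[C]_d) : Prop :=
  (forall x a, psd (M x a)) /\ (forall x, \sum_(a : A) M x a = 1%:M).

Definition POVM (d : nat) (J : finType) (F : J -> 'M[C]_d) : Prop :=
  (forall j, psd (F j)) /\ \sum_(j : J) F j = 1%:M.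

(* A quantum instrument {E_i}_i from C^din to C^dout, each CP map E_i given
   by Kraus operators K i k (k < m):  E_i(rho) = sum_k K i k rho (K i k)^*.
   Trace preservation of sum_i E_i:  sum_{i,k} (K i k)^* K i k = 1. *)
Definition instrument (din dout : nat) (I : finType) (m : nat)
  (K : I -> 'I_m -> 'M[C]_(dout, din)) : Prop :=
  \sum_(i : I) \sum_(k < m) adjmx (K i k) *m K i k = 1%:M.

Definition instr_adj (din dout : nat) (I : finType) (m : nat)
  (K : I -> 'I_m -> 'M[C]_(dout, din)) (i : I) (Y : 'M[C]_dout) : 'M[C]_din :=
  \sum_(k < m) adjmx (K i k) *m Y *m K i k.

Definition pmd_succeq (dQ dQ' : nat) (X A Y B : finType)
  (M : X -> A -> 'M[C]_dQ) (N : Y -> B -> 'M[C]_dQ') : Prop :=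
  exists (Rr : finType) (mu : Rr -> C) (I : finType) (m : nat)
         (K : Rr -> I -> 'I_m -> 'M[C]_(dQ, dQ'))
         (p : I -> Y -> Rr -> X -> C)
         (q : A -> X -> I -> Y -> Rr -> B -> C),
    prob_dist mu /\
        (forall r, instrument (K r)) /\
        (forall i y r, prob_dist (p i y r)) /\
        (forall a x i y r, prob_dist (q a x i y r)) /\
        (forall y b, N y b =
           \sum_(r : Rr) mu r *:
             \sum_(i : I) \sum_(x : X) \sum_(a : A)
               (q a x i y r b * p i y r x) *: instr_adj (K r) i (M x a)).

(* One-way LOCC conversion (Alice -> Bob) in the spatial model.
   - shared randomness r ~ mu;
   - pre-processing: Alice applies an instrument {E_{i|r}} from her input
     space C^dQ' to C^dQ (x) C^dA (input of M, quantum memory of dimension dA),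
     and sends the classical outcome i to Bob; Bob, from y, i, r, draws the
     program x together with a classical memory value w ~ p(x,w|i,y,r);
   - M is used once: Alice's C^dQ part is fed in, Bob inputs x, gets a;
   - post-processing: Alice measures her quantum memory with a POVM
     {F_{j|i,r}} and sends j to Bob; Bob outputs b ~ q(b|a,x,w,i,j,y,r). *)
Definition oneway_LOCC_convertible (dQ dQ' : nat) (X A Y B : finType)
  (M : X -> A -> 'M[C]_dQ) (N : Y -> B -> 'M[C]_dQ') : Prop :=
  exists (Rr : finType) (mu : Rr -> C) (dA : nat) (I : finType) (m : nat)
         (K : Rr -> I -> 'I_m -> 'M[C]_(dQ * dA, dQ'))
         (W : finType) (p : I -> Y -> Rr -> (X * W)%type -> C)
         (J : finType) (F : Rr -> I -> J -> 'M[C]_dA)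
         (q : A -> X -> W -> I -> J -> Y -> Rr -> B -> C),
    prob_dist mu /\
        (forall r, instrument (K r)) /\
        (forall i y r, prob_dist (p i y r)) /\
        (forall r i, POVM (F r i)) /\
        (forall a x w i j y r, prob_dist (q a x w i j y r)) /\
        (forall y b, N y b =
           \sum_(r : Rr) mu r *:
             \sum_(i : I) \sum_(xw : (X * W)%type) \sum_(a : A) \sum_(j : J)
               (q a xw.1 xw.2 i j y r b * p i y r xw) *:
                 instr_adj (K r) i (tensmx (M xw.1 a) (F r i j))).

End Defs.

(* Main.v *)
Require Import Defs.
From HB Require Import structures.
From mathcomp Require Import all_boot all_order all_algebra mxtens spectral.
Set Implicit Arguments. Unset Strict Implicit. Unset Printing Implicit Defensive.
Import Order.TTheory GRing.Theory Num.Theory.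
Local Open Scope ring_scope.

Section Aux.
Variable C : numClosedFieldType.

Lemma adjmxK m n (A : 'M[C]_(m, n)) : adjmx (adjmx A) = A.
Proof. by apply/matrixP => i j; rewrite !mxE conjCK. Qed.

Lemma adjmx_mul m n p (A : 'M[C]_(m, n)) (B : 'M[C]_(n, p)) :
  adjmx (A *m B) = adjmx B *m adjmx A.
Proof. by rewrite /adjmx map_mxM trmx_mul. Qed.

Lemma adjmx_tens m n p q (A : 'M[C]_(m, n)) (B : 'M[C]_(p, q)) :
  adjmx (A *t B) = adjmx A *t adjmx B.
Proof. by apply/matrixP => i j; rewrite !mxE rmorphM. Qed.

Lemma adjmx1 n : adjmx (1%:M : 'M[C]_n) = 1%:M.
Proof. by apply/matrixP => i j; rewrite !mxE eq_sym rmorphMn rmorph1. Qed.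

Lemma adjmx_castr m m' n (e : m = m') (A : 'M[C]_(m, n)) :
  adjmx (castmx (e, erefl n) A) = castmx (erefl n, e) (adjmx A).
Proof. by case: m' / e; rewrite !castmx_id. Qed.

Lemma adj_cast_conj m m' n (e : m = m') (K : 'M[C]_(m, n)) (Y : 'M[C]_m') :
  adjmx (castmx (e, erefl n) K) *m Y *m castmx (e, erefl n) K
  = adjmx K *m castmx (esym e, esym e) Y *m K.
Proof. by case: m' / e in Y *; rewrite !castmx_id. Qed.

Lemma tens_sumr m n p q (I : finType) (A : 'M[C]_(m, n)) (G : I -> 'M[C]_(p, q)) :
  A *t (\sum_i G i) = \sum_i A *t G i.
Proof.
apply/matrixP => i j; rewrite !mxE summxE summxE mulr_sumr.
by apply: eq_bigr => l _; rewrite !mxE.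
Qed.

Lemma tens11 a b : (1%:M : 'M[C]_a) *t (1%:M : 'M[C]_b) = 1%:M.
Proof.
apply/matrixP => i j.
case: (mxtens_indexP i) => i1 i2; case: (mxtens_indexP j) => j1 j2.
rewrite tensmxE !mxE (can_eq (@mxtens_indexK _ _)) xpair_eqE.
by case: (i1 == j1); case: (i2 == j2); rewrite ?mulr1 ?mulr0.
Qed.

Lemma sum_unindex (T : nmodType) m n (f : 'I_m -> 'I_n -> T) :
  \sum_(k < m * n) f (mxtens_unindex k).1 (mxtens_unindex k).2
  = \sum_(k1 < m) \sum_(k2 < n) f k1 k2.
Proof.
rewrite pair_big /=; symmetry.
apply: (reindex (@mxtens_unindex m n)) => /=.
by exists (@mxtens_index m n) => k _; rewrite (mxtens_indexK, mxtens_unindexK).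
Qed.

Definition decw n (G : 'M[C]_n) (l : 'I_n) : 'cV[C]_n :=
  sqrtC (spectral_diag G 0 l) *: adjmx (row l (spectralmx G)).

Lemma psd_decomp n (G : 'M[C]_n) : psd G ->
  G = \sum_l decw G l *m adjmx (decw G l).
Proof.
move=> [Gh Gpos].
have Gn : G \is normalmx.
  apply/eqP; rewrite /= -map_trmx -/(adjmx G) Gh.
  by [].
have /orthomx_spectralP := Gn.
set P := spectralmx G; set s := spectral_diag G => GE.
have PU : P \is unitarymx by apply: spectral_unitarymx.
have iP : invmx P = adjmx P by rewrite invmx_unitary // /adjmx map_trmx.
have PPt : P *m adjmx P = 1%:M.
  by move/unitarymxP: PU; rewrite /adjmx map_trmx.
have s_ge0 l : 0 <= s 0 l.
  have := Gpos (adjmx (row l P)); rewrite adjmxK.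
  have -> : (row l P *m G *m adjmx (row l P)) 0 0 = (P *m G *m adjmx P) l l.
    rewrite !mxE; apply: eq_bigr => k _; rewrite !mxE; congr (_ * _).
    by apply: eq_bigr => t _; rewrite !mxE.
  rewrite {1}GE iP !mulmxA PPt mul1mx -mulmxA PPt mulmx1.
  by rewrite !mxE eqxx mulr1n.
rewrite {1}GE iP; apply/matrixP => i j.
rewrite summxE mul_mx_diag mxE; apply: eq_bigr => l _.
rewrite !mxE big_ord1 !mxE.
have hc : (sqrtC (s 0 l))^* = sqrtC (s 0 l) by rewrite geC0_conj // sqrtC_ge0.
rewrite rmorphM /= hc conjCK mulrACA -expr2 sqrtCK.
by rewrite mulrAC mulrC.
Qed.


Definition Kext dQ dQ' dA m (K : 'I_m -> 'M[C]_(dQ * dA, dQ')) (w : 'I_dA -> 'cV[C]_dA)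
  (kk : 'I_(m * dA)) : 'M[C]_(dQ, dQ') :=
  castmx (muln1 dQ, erefl dQ')
    (((1%:M : 'M[C]_dQ) *t adjmx (w (mxtens_unindex kk).2)) *m K (mxtens_unindex kk).1).

Lemma Kext_term dQ dQ' dA (K : 'M[C]_(dQ * dA, dQ')) (v : 'cV[C]_dA) (Y : 'M[C]_dQ) :
  let Z := castmx (muln1 dQ, erefl dQ') (((1%:M : 'M[C]_dQ) *t adjmx v) *m K) in
  adjmx Z *m Y *m Z = adjmx K *m (Y *t (v *m adjmx v)) *m K.
Proof.
rewrite /= adj_cast_conj.
have -> : castmx (esym (muln1 dQ), esym (muln1 dQ)) Y = Y *t (1%:M : 'M[C]_1).
  by rewrite tens_mx_scalar scale1r.
rewrite adjmx_mul adjmx_tens adjmx1 adjmxK.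
rewrite -!mulmxA; congr (_ *m _); rewrite !mulmxA; congr (_ *m _).
by rewrite !tensmx_mul mul1mx !mulmx1.
Qed.

Lemma Kext_sum dQ dQ' dA m (K : 'I_m -> 'M[C]_(dQ * dA, dQ')) (w : 'I_dA -> 'cV[C]_dA)
  (Y : 'M[C]_dQ) :
  \sum_(kk < m * dA) adjmx (Kext K w kk) *m Y *m Kext K w kk
  = \sum_(k < m) adjmx (K k) *m (Y *t \sum_l (w l *m adjmx (w l))) *m K k.
Proof.
rewrite /Kext (sum_unindex (fun k l =>
   let Z := castmx (muln1 dQ, erefl dQ') (((1%:M : 'M[C]_dQ) *t adjmx (w l)) *m K k) in
   adjmx Z *m Y *m Z)) /=.
apply: eq_bigr => k _.
rewrite tens_sumr mulmx_sumr mulmx_suml; apply: eq_bigr => l _.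
exact: Kext_term.
Qed.


Lemma adj_cast_mul m m' n (e : m = m') (K : 'M[C]_(m, n)) :
  adjmx (castmx (e, erefl n) K) *m castmx (e, erefl n) K = adjmx K *m K.
Proof. by case: m' / e; rewrite !castmx_id. Qed.

Lemma sum_unit (T : nmodType) (F : unit -> T) : \sum_(u : unit) F u = F tt.
Proof. by rewrite (big_pred1 tt) // => -[]. Qed.

Lemma instr_adj_sum din dout (I J : finType) m (K : I -> 'I_m -> 'M[C]_(dout, din)) i
  (G : J -> 'M[C]_dout) :
  \sum_j instr_adj K i (G j) = instr_adj K i (\sum_j G j).
Proof.
rewrite /instr_adj exchange_big; apply: eq_bigr => k _.
by rewrite mulmx_sumr mulmx_suml.
Qed.

Lemma sum_pair (T : nmodType) (I J : finType) (F : (I * J)%type -> T) :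
  \sum_(ij : (I * J)%type) F ij = \sum_i \sum_j F (i, j).
Proof. by rewrite pair_big; apply: eq_big => -[i j]. Qed.

Lemma psd1 : psd (1%:M : 'M[C]_1).
Proof.
split; first exact: adjmx1.
move=> v; rewrite mulmx1 !mxE; apply: sumr_ge0 => k _.
by rewrite !mxE mulrC mul_conjC_ge0.
Qed.

End Aux.

Theorem proposition1 (C : numClosedFieldType) (dQ dQ' : nat)
  (X A Y B : finType)
  (M : X -> A -> 'M[C]_dQ) (N : Y -> B -> 'M[C]_dQ') :
  PMD M -> PMD N ->
  (pmd_succeq M N <-> oneway_LOCC_convertible M N).
Proof.
move=> _ _; split.
- move=> [Rr [mu [I [m [K [p [q [Hmu [HK [Hp [Hq HN]]]]]]]]]]].
  exists Rr, mu, 1%N, I, m,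
    (fun r i k => castmx (esym (muln1 dQ), erefl dQ') (K r i k)),
    unit, (fun i y r xw => p i y r xw.1), unit, (fun r i j => (1%:M : 'M[C]_1)),
    (fun a x w i j y r b => q a x i y r b).
  split; first exact: Hmu.
  split.
    move=> r; rewrite /instrument -(HK r); apply: eq_bigr => i _.
    by apply: eq_bigr => k _; rewrite adj_cast_mul.
  split.
    move=> i y r; have [H0 H1] := Hp i y r; split; first by move=> xw.
    rewrite -H1; transitivity (\sum_x \sum_(w : unit) p i y r x).
      by rewrite pair_big.
    by apply: eq_bigr => x _; rewrite sum_unit.
  split.
    by move=> r i; split; [move=> j; exact: psd1 | rewrite sum_unit].
  split; first by move=> *; exact: Hq.
  move=> y b; rewrite HN; apply: eq_bigr => r _; congr (_ *: _).
  apply: eq_bigr => i _.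
  transitivity (\sum_x \sum_(w : unit) \sum_a \sum_(j : unit)
     (q a x i y r b * p i y r x) *: instr_adj (K r) i (M x a)).
    apply: eq_bigr => x _; rewrite sum_unit; apply: eq_bigr => a _; by rewrite sum_unit.
  rewrite pair_big /=; apply: eq_bigr => -[x w] _ /=; apply: eq_bigr => a _; rewrite sum_unit /= sum_unit; congr (_ *: _).
  rewrite /instr_adj; apply: eq_bigr => k _; rewrite adj_cast_conj.
  by rewrite tens_mx_scalar scale1r castmx_comp castmx_id.
- move=> [Rr [mu [dA [I [m [K [W [p [J [F [q [Hmu [HK [Hp [HF [Hq HN]]]]]]]]]]]]]]]].
  pose pp i y r x := \sum_(w : W) p i y r (x, w).
  pose qq a x (ij : (I * J)%type) y r b :=
    if pp ij.1 y r x == 0 then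
      (if [pick w : W] is Some w then q a x w ij.1 ij.2 y r b else 0)
    else (\sum_w p ij.1 y r (x, w) * q a x w ij.1 ij.2 y r b) / pp ij.1 y r x.
  pose KK r (ij : (I * J)%type) := Kext (K r ij.1) (decw (F r ij.1 ij.2)).
  have Hadj r i j Y0 : instr_adj (KK r) (i, j) Y0 = instr_adj (K r) i (Y0 *t F r i j).
    rewrite /instr_adj /KK /= Kext_sum -psd_decomp //.
    by case: (HF r i) => H _; exact: H j.
  have pp_ge0 i y r x : 0 <= pp i y r x.
    by apply: sumr_ge0 => w _; case: (Hp i y r) => H _; exact: H.
  have Hqp a x i j y r b :
      qq a x (i, j) y r b * pp i y r x = \sum_w q a x w i j y r b * p i y r (x, w).
    rewrite /qq /=; case: eqP => H0.
      rewrite H0 mulr0; symmetry; apply: big1 => w _.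
      have -> : p i y r (x, w) = 0; last by rewrite mulr0.
      apply: (psumr_eq0P _ H0) => // w' _.
      by case: (Hp i y r) => H _; exact: H.
    rewrite divfK; last by apply/eqP.
    by apply: eq_bigr => w _; rewrite mulrC.
  exists Rr, mu, (I * J)%type, (m * dA)%N, KK, (fun ij y r x => pp ij.1 y r x), qq.
  split; first exact: Hmu.
  split.
    move=> r; rewrite /instrument.
    transitivity (\sum_(ij : (I * J)%type) instr_adj (KK r) ij 1%:M).
      apply: eq_bigr => ij _; rewrite /instr_adj; apply: eq_bigr => k _.
      by rewrite mulmx1.
    rewrite sum_pair.
    rewrite -(HK r); apply: eq_bigr => i _.
    under eq_bigr do rewrite Hadj.
    rewrite instr_adj_sum -tens_sumr.
    case: (HF r i) => _ ->; rewrite tens11 /instr_adj.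
    by apply: eq_bigr => k _; rewrite mulmx1.
  split.
    move=> [i j] y r /=; split; first by move=> x; exact: pp_ge0.
    by case: (Hp i y r) => _ <-; rewrite /pp sum_pair.
  split.
    move=> a x [i j] y r; rewrite /qq /=; case: eqP => H0.
      case: pickP => [w _ | Hn]; first exact: Hq.
      exfalso; case: (Hp i y r) => _ H1.
      have : \sum_(xw : (X * W)%type) p i y r xw = 0.
        by apply: big1 => -[x' w'] _; have := Hn w'.
      by rewrite H1 => /eqP; rewrite oner_eq0.
    split.
      move=> b; apply: divr_ge0; last exact: pp_ge0.
      apply: sumr_ge0 => w _; apply: mulr_ge0.
        by case: (Hp i y r) => H _; exact: H.
      by case: (Hq a x w i j y r) => H _; exact: H.
    rewrite -mulr_suml exchange_big /=.
    under eq_bigr do rewrite -mulr_sumr.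
    under eq_bigr => w _ do rewrite (proj2 (Hq a x w i j y r)) mulr1.
    by rewrite mulfV //; apply/eqP.
  move=> y b; rewrite HN; apply: eq_bigr => r _; congr (_ *: _).
  symmetry.
  rewrite sum_pair.
  apply: eq_bigr => i _.
  transitivity (\sum_j \sum_x \sum_a \sum_w
     (q a x w i j y r b * p i y r (x, w)) *: instr_adj (K r) i (M x a *t F r i j)).
    apply: eq_bigr => j _; apply: eq_bigr => x _; apply: eq_bigr => a _.
    by rewrite Hqp Hadj scaler_suml.
  symmetry.
  rewrite sum_pair /=.
  under eq_bigr => x _ do rewrite exchange_big.
  under eq_bigr => x _ do under eq_bigr => a _ do rewrite exchange_big.
  under eq_bigr => x _ do rewrite exchange_big.
  by rewrite exchange_big.
Qed.
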